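(* Let $F$ be a field of characteristic zero, let $G$ be a torsion-free locally cyclic group, and let $\mathfrak{S}$ be a Schur ring over $G$. Then $\mathfrak{S}$ is either the group ring $F[G]$ or the symmetric Schur ring $F[G]^{\pm}$.
   Context: A group is locally cyclic if every finitely generated subgroup is cyclic. For finite $C\subseteq G$, $\overline{C}=\sum_{g\in C}g\in F[G]$ and $C^*=\{g^{-1}\mid g\in C\}$. A Schur ring over $G$ is an $F$-subspace $\mathfrak{S}=\operatorname{Span}_F\{\overline{C}\mid C\in\mathcal{D}(\mathfrak{S})\}$ of $F[G]$ where $\mathcal{D}(\mathfrak{S})$ is a partition of $G$ into finite sets such that (i) $\{1\}\in\mathcal{D}(\mathfrak{S})$; (ii) $C\in\mathcal{D}(\mathfrak{S})\Rightarrow C^*\in\mathcal{D}(\mathfrak{S})$; (iii) for all $C,D\in\mathcal{D}(\mathfrak{S})$, $\overline{C}\,\overline{D}=\sum_{E}\lambda_{CDE}\overline{E}$ with finitely many nonzero $\lambda_{CDE}\in F$. The group ring $F[G]$ is the Schur ring with partition into singletons; the symmetric Schur ring $F[G]^{\pm}$ is the Schur ring with partition $\{\{g,g^{-1}\}\mid g\in G\}$. *)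

(* Defs.v *)
From HB Require Import structures.
From mathcomp Require Import all_boot all_order all_algebra.
From mathcomp Require Import finmap.
Set Implicit Arguments. Unset Strict Implicit. Unset Printing Implicit Defensive.
Import GRing.Theory.
Local Open Scope ring_scope.
Local Open Scope fset_scope.

(* The group G is written additively (a zmodType): every locally cyclic
   group is abelian.  Elements of the group ring F[G] are represented as
   finitely supported functions G -> F. *)

Section SchurDefs.
Variables (F : fieldType) (G : zmodType).

Definition torsion_free : Prop :=
  forall (x : G) (n : nat), (0 < n)%N -> x *+ n = 0 -> x = 0.

Definition gen_subgroup (s : seq G) (x : G) : Prop :=
  exists c : seq int, size c = size s /\
    x = \sum_(i < size s) (nth 0 s i) *~ (nth 0 c i).

Definition cyclic_subgroup (g : G) (x : G) : Prop := exists k : int, x = g *~ k.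

Definition locally_cyclic : Prop :=
  forall s : seq G, exists g : G,
    forall x, gen_subgroup s x <-> cyclic_subgroup g x.

Definition sbar (C : {fset G}) : G -> F := fun x => (x \in C)%:R.

Definition sbar_mul (C D : {fset G}) : G -> F :=
  fun x => \sum_(c <- C) \sum_(d <- D) ((c + d) == x)%:R.

Definition fset_inv (C : {fset G}) : {fset G} := [fset - c | c in C].

Definition is_partition (D : {fset G} -> Prop) : Prop :=
  (forall C, D C -> C != fset0) /\
  (forall C E, D C -> D E -> (exists x, x \in C /\ x \in E) -> C = E) /\
  (forall x : G, exists C, D C /\ x \in C).

Definition span_of (D : {fset G} -> Prop) (f : G -> F) : Prop :=
  exists (Cs : seq {fset G}) (a : {fset G} -> F),
    (forall C, C \in Cs -> D C) /\
    forall x, f x = \sum_(C <- Cs) a C * sbar C x.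

Definition schur_partition (D : {fset G} -> Prop) : Prop :=
  is_partition D /\
  D [fset 0] /\
  (forall C, D C -> D (fset_inv C)) /\
  (forall C E, D C -> D E ->
     exists (Es : seq {fset G}) (lam : {fset G} -> F),
       (forall E', E' \in Es -> D E') /\
       forall x, sbar_mul C E x = \sum_(E' <- Es) lam E' * sbar E' x).

Definition schur_ring (S : (G -> F) -> Prop) : Prop :=
  exists D, schur_partition D /\ forall f, S f <-> span_of D f.

Definition singleton_partition (C : {fset G}) : Prop := exists g : G, C = [fset g].
Definition symmetric_partition (C : {fset G}) : Prop :=
  exists g : G, C = [fset g; - g].

Definition group_ring : (G -> F) -> Prop := span_of singleton_partition.
Definition sym_group_ring : (G -> F) -> Prop := span_of symmetric_partition.

End SchurDefs.

(* Main.v *)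
Require Import Defs.
From HB Require Import structures.
From mathcomp Require Import all_boot all_order all_algebra.
From mathcomp Require Import finmap zify.
From Stdlib Require Import Classical.
Set Implicit Arguments. Unset Strict Implicit. Unset Printing Implicit Defensive.
Import GRing.Theory.
Local Open Scope fset_scope.
Local Open Scope ring_scope.

Lemma lc_coords (G : zmodType) (lcG : locally_cyclic G) (s : seq G) :
  exists g : G, forall x, x \in s -> exists k, x = g *~ k.
Proof.
have [g hg] := lcG s; exists g => x xs.
have : gen_subgroup s x; last by move/hg => [k ->]; exists k.
pose i0 := index x s.
exists [seq ((i == i0) : nat)%:Z | i <- iota 0 (size s)].
rewrite size_map size_iota; split => //.
have i0s : (i0 < size s)%N by rewrite index_mem.
rewrite (bigD1 (Ordinal i0s)) //= (nth_map 0%N) ?size_iota // nth_iota //.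
rewrite add0n eqxx mulr1z nth_index // big1 ?addr0 // => i ni.
rewrite (nth_map 0%N) ?size_iota // nth_iota // add0n.
have -> : (nat_of_ord i == i0) = false.
  by apply/negbTE; move: ni; apply: contra => /eqP h; apply/eqP/val_inj.
by rewrite mulr0z.
Qed.

Lemma ar1 (b t x : int) : ~~ ((b < x) && (x < t)) -> b <= x <= t -> x = b \/ x = t.
Proof. lia. Qed.
Lemma ar2 (b t x u z : int) : (x = b \/ x = t) -> (u = b \/ u = t) -> b <= z <= t ->
  x != u -> x != z -> u != z -> b < z < t.
Proof. by move=> [->|->] [->|->] h; rewrite ?eqxx //; lia. Qed.
Lemma ar3 (b t o : int) : b < o < t -> 0 < t - b.
Proof. lia. Qed.
Lemma ar4 (b t e : int) : b <= e <= t -> e != t -> e != b -> b < e < t.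
Proof. lia. Qed.
Lemma ar5 (b t o : int) : b < o < t -> o = t -> False.
Proof. lia. Qed.
Lemma ar6 (b t o : int) : b < o < t -> o = b -> False.
Proof. lia. Qed.

Section Main.
Variables (F : fieldType) (G : zmodType).
Hypothesis charF0 : [pchar F] =i pred0.
Hypothesis tfG : torsion_free G.
Variable D : {fset G} -> Prop.
Hypothesis hD : schur_partition F D.
Hypothesis lcG : locally_cyclic G.

Lemma part_ex x : exists C, D C /\ x \in C.
Proof. by case: hD => [[_ [_ h]] _]; apply: h. Qed.

Lemma part_uniq C C' x : D C -> D C' -> x \in C -> x \in C' -> C = C'.
Proof. case: hD => [[_ [h _]] _] DC DC' xC xC'; apply: h => //; by exists x. Qed.

Lemma part0 : D [fset 0].
Proof. by case: hD => _ [h _]. Qed.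

Lemma part_inv C : D C -> D (fset_inv C).
Proof. by case: hD => _ [_ [h _]]; apply: h. Qed.

Lemma natr_inj m n : (m%:R : F) = n%:R -> m = n.
Proof.
move=> h; have H := (GRing.pcharf0P F).1 charF0.
wlog le_mn : m n h / (m <= n)%N.
  move=> W; case: (leqP m n) => [/W->//|/ltnW lt]; by symmetry; apply: W.
apply/eqP; rewrite eqn_leq le_mn /=.
have : ((n - m)%N%:R == 0 :> F) by rewrite natrB // h subrr.
by rewrite H subn_eq0.
Qed.

Definition cc (f : G -> nat) :=
  forall C x y, D C -> x \in C -> y \in C -> f x = f y.

Definition Nf (K E : {fset G}) (x : G) : nat :=
  (\sum_(c <- K) \sum_(d <- E) (((c + d)%R == x) : nat))%N.

Lemma Nf_cc K E : D K -> D E -> cc (Nf K E).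
Proof.
move=> DK DE C x y DC xC yC.
case: hD => _ [_ [_ h]]; have [Es [lam [hEs hx]]] := h K E DK DE.
have e z : sbar_mul F K E z = (Nf K E z)%:R.
  by rewrite /sbar_mul /Nf natr_sum; apply: eq_bigr => c _; rewrite natr_sum.
apply: natr_inj; rewrite -!e !hx; apply: eq_big_seq => E' /hEs DE'.
congr (_ * _); rewrite /sbar.
have -> : (x \in E') = (y \in E'); last by [].
apply/idP/idP => h1.
  by rewrite (part_uniq DE' DC h1 xC).
by rewrite (part_uniq DE' DC h1 yC).
Qed.


Definition closed (A : {fset G}) :=
  forall C w, D C -> w \in C -> w \in A -> C `<=` A.

Lemma closed_class C : D C -> closed C.
Proof.
move=> DC C' w DC' wC' wC; by rewrite (part_uniq DC' DC wC' wC) fsubset_refl.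
Qed.

Lemma closedU A B : closed A -> closed B -> closed (A `|` B).
Proof.
move=> hA hB C w DC wC; rewrite in_fsetU => /orP [wA|wB].
  by apply: fsubset_trans (hA _ _ DC wC wA) (fsubsetUl _ _).
by apply: fsubset_trans (hB _ _ DC wC wB) (fsubsetUr _ _).
Qed.

Lemma closed_cover (s : seq G) : exists A, closed A /\ {subset s <= A}.
Proof.
elim: s => [|x s [A [cA sA]]].
  exists fset0; split => // C w _ _; by rewrite in_fset0.
have [C [DC xC]] := part_ex x.
exists (A `|` C); split; first by apply: closedU => //; apply: closed_class.
move=> w; rewrite inE => /orP [/eqP->|ws]; rewrite in_fsetU ?xC ?orbT //.
by rewrite sA.
Qed.

Lemma closedD A K : closed A -> D K -> closed (A `\` K).
Proof.
move=> cA DK C w DC wC; rewrite in_fsetD => /andP [wK wA].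
apply/fsubsetP => v vC; rewrite in_fsetD (fsubsetP (cA _ _ DC wC wA)) // andbT.
apply/negP => vK; move: wK; by rewrite -(part_uniq DC DK vC vK) wC.
Qed.

Definition H (f : G -> nat) (K A : {fset G}) (z : G) : nat :=
  (\sum_(a <- A) f a * \sum_(e <- K) (((a + e)%R == z) : nat))%N.

Lemma H_cc f K : cc f -> D K -> forall A, closed A -> cc (H f K A).
Proof.
move=> ccf DK A; move: {2}#|`A| (leqnn #|`A|) => n; elim: n A.
  move=> A; rewrite leqn0 cardfs_eq0 => /eqP -> _ C x y _ _ _.
  by rewrite /H !big_seq_fset0.
move=> n IH A cardA cA C x y DC xC yC.
have [/eqP A0|/fset0Pn [a0 a0A]] := boolP (A == fset0).
  by rewrite /H A0 !big_seq_fset0.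
have [C0 [DC0 a0C0]] := part_ex a0.
have sC0 := cA _ _ DC0 a0C0 a0A.
have split z : H f K A z = (H f K C0 z + H f K (A `\` C0) z)%N.
  have e1 : [fset v | v in A & v \in C0] = C0.
    apply/fsetP => v; rewrite !inE.
    by apply/andP/idP => [[]//|vC]; split => //; apply: (fsubsetP sC0).
  have e2 : [fset v | v in A & v \notin C0] = A `\` C0.
    by apply/fsetP => v; rewrite !inE andbC.
  by rewrite /H (big_fsetID _ (fun v => v \in C0)) e1 e2.
have HC0 z : H f K C0 z = (f a0 * Nf C0 K z)%N.
  rewrite /H /Nf big_distrr /=; apply: eq_big_seq => a aC0.
  by rewrite (ccf _ _ _ DC0 aC0 a0C0).
rewrite !split !HC0 (Nf_cc DC0 DK DC xC yC); congr (_ + _)%N.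
apply: (IH _ _ (closedD cA DC0)) DC xC yC.
have : A `\` C0 `<` A.
  rewrite fproperEneq fsubDset fsubsetUr andbT; apply/eqP => e.
  by move: a0A; rewrite -e in_fsetD a0C0.
move/fproper_ltn_card => lt; by rewrite -ltnS (leq_trans lt).
Qed.

Lemma conv_cc f K : cc f -> D K -> cc (fun x => \sum_(e <- K) f (x - e)%R)%N.
Proof.
move=> ccf DK C x y DC xC yC.
have [A [cA sA]] := closed_cover ([seq x - e | e <- K] ++ [seq y - e | e <- K]).
have eqH z : (forall e, e \in K -> z - e \in A) ->
    (\sum_(e <- K) f (z - e)%R)%N = H f K A z.
  move=> hz; rewrite /H.
  under [RHS]eq_bigr do rewrite big_distrr /=.
  rewrite exchange_big /=; apply: eq_big_seq => e eK.
  rewrite (bigD1_seq (z - e)) ?fset_uniq ?hz //= subrK eqxx muln1.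
  rewrite big1 ?addn0 // => a /negbTE ne; case: eqP; rewrite ?muln0 //.
  by move=> h; move: ne; rewrite -h addrK eqxx.
rewrite !eqH; first exact: (H_cc ccf DK cA DC xC yC).
  by move=> e eK; apply: sA; rewrite mem_cat (map_f (fun e => y - e)) ?orbT.
by move=> e eK; apply: sA; rewrite mem_cat (map_f (fun e => x - e)).
Qed.


Fixpoint phi (K : {fset G}) (f : G -> nat) (k : nat) (x : G) : nat :=
  if k is k'.+1 then (\sum_(e <- K) phi K f k' (x - e)%R)%N else f x.

Lemma phi_cc K f k : cc f -> D K -> cc (phi K f k).
Proof. move=> ccf DK; elim: k => [//|k IH] /=; exact: conv_cc. Qed.

Lemma phi_mono K f k x e : e \in K -> (phi K f k x <= phi K f k.+1 (x + e))%N.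
Proof.
move=> eK /=; rewrite (bigD1_seq e) ?fset_uniq //= addrK; exact: leq_addr.
Qed.

Lemma phi_mul K f k a x e : e \in K ->
  (phi K f k x <= phi K f (k + a) (x + e *+ a))%N.
Proof.
move=> eK; elim: a => [|a IH]; first by rewrite addn0 mulr0n addr0.
apply: (leq_trans IH); rewrite addnS mulrSr addrA; exact: phi_mono.
Qed.

Lemma sum_pos (s : seq G) (Fn : G -> nat) :
  (0 < \sum_(e <- s) Fn e)%N -> exists2 e, e \in s & (0 < Fn e)%N.
Proof.
elim: s => [|a s IH]; first by rewrite big_nil.
rewrite big_cons; case: (posnP (Fn a)) => [->|pa] /=.
  by move/IH => [e es pe]; exists e => //; rewrite inE es orbT.
by move=> _; exists a => //; rewrite inE eqxx.
Qed.

Lemma phi_ind K f (R : nat -> G -> Prop) :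
  (forall y, (0 < f y)%N -> R 0%N y) ->
  (forall j y e, R j y -> e \in K -> R j.+1 (y + e)) ->
  forall k x, (0 < phi K f k x)%N -> R k x.
Proof.
move=> R0 RS; elim => [//|k IH] x /= /sum_pos [e eK pe].
by have := RS _ _ _ (IH _ pe) eK; rewrite subrK.
Qed.

Lemma sum1 (s : seq G) (Fn : G -> nat) : uniq s ->
  (\sum_(e <- s) Fn e)%N = 1%N ->
  exists e0, [/\ e0 \in s, Fn e0 = 1%N & forall e, e \in s -> e != e0 -> Fn e = 0%N].
Proof.
move=> us h; have [e0 e0s pe0] : exists2 e, e \in s & (0 < Fn e)%N.
  by apply: sum_pos; rewrite h.
move: h; rewrite (bigD1_seq e0) //= => h.
have he : Fn e0 = 1%N.
  by move: h pe0; case: (Fn e0) => [|[|m]] //=; rewrite !addSn.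
move: h; rewrite he add1n => /eqP; rewrite eqSS.
rewrite sum_nat_seq_eq0 => /allP al; exists e0; split => // e es ne.
by apply/eqP; have := al e es; rewrite ne.
Qed.

Definition delta0 (x : G) : nat := (x == 0).
Definition cnt (E : {fset G}) := phi E delta0.

Lemma delta0_cc : cc delta0.
Proof.
move=> C x y DC xC yC; rewrite /delta0.
have h z w : z \in C -> w \in C -> z = 0 -> w = 0.
  move=> zC wC z0; have e : C = [fset 0].
    by apply: (part_uniq DC part0 zC); rewrite z0 inE.
  by move: wC; rewrite e inE => /eqP.
case: (eqVneq x 0) => [x0|nx]; first by rewrite (h x y xC yC x0) eqxx.
case: (eqVneq y 0) => [y0|ny]; first by move: nx; rewrite (h y x yC xC y0) eqxx.
by [].
Qed.

Lemma cnt_cc E k : D E -> cc (cnt E k).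
Proof. move=> DE; apply: phi_cc => //; exact: delta0_cc. Qed.

Lemma cnt_kk E e k : e \in E -> (0 < cnt E k (e *+ k))%N.
Proof.
move=> eE; have := phi_mul delta0 0 k 0 eE.
by rewrite add0n add0r /= /delta0 eqxx.
Qed.

Lemma cnt_one E k w : cnt E k.+1 w = 1%N -> exists2 e, e \in E & w = e *+ k.+1.
Proof.
elim: k w => [|k IH] w.
  rewrite /cnt /= => /(sum1 (fset_uniq E)) [e0 [e0E h _]]; exists e0 => //.
  by move: h; rewrite /delta0 subr_eq0; case: eqP.
rewrite /cnt /= => /(sum1 (fset_uniq E)) [e0 [e0E h oth]].
have [e1 e1E he1] := IH _ h.
have e10 : e1 = e0.
  apply/eqP; apply/negP => /negP ne.
  have := oth _ e1E ne; apply/eqP; rewrite -lt0n.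
  have -> : w - e1 = (w - e1 - e0) + e0 by rewrite subrK.
  apply: (leq_trans _ (phi_mono _ _ _ e0E)).
  have -> : w - e1 - e0 = e1 *+ k by rewrite addrAC he1 mulrS addrC addKr.
  exact: cnt_kk.
exists e0 => //; move: he1; rewrite e10 => /eqP; rewrite subr_eq => /eqP ->.
by rewrite -mulrSr.
Qed.


Lemma coord_inj (g : G) a b : g != 0 -> g *~ a = g *~ b -> a = b.
Proof.
move=> gn e; apply/eqP; rewrite -subr_eq0; apply/eqP.
have : g *~ (a - b) = 0 by rewrite mulrzBr e subrr.
case: (a - b) => [[|n]|n] //=.
  by move=> h; move: gn; rewrite (tfG (ltn0Sn n) h) eqxx.
rewrite NegzE mulrNz => /eqP; rewrite oppr_eq0 => /eqP h.
by move: gn; rewrite (tfG (ltn0Sn n) h) eqxx.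
Qed.

Lemma mulrn_coord (g : G) tau n : (g *~ tau) *+ n = g *~ (tau * n%:Z).
Proof. by rewrite -mulrz_nat -mulrzA natz. Qed.

Lemma coord_max (g : G) (s : seq G) : g != 0 -> s != [::] ->
  (forall x, x \in s -> exists k, x = g *~ k) ->
  exists t tau, [/\ t \in s, t = g *~ tau &
     forall x k, x \in s -> x = g *~ k -> k <= tau].
Proof.
move=> gn; elim: s => [//|a s IH] _ hs.
have [al ea] := hs a (mem_head a s).
have hk x k : x = a -> x = g *~ k -> k = al.
  by move=> -> e; apply: (coord_inj gn); rewrite -e -ea.
case: (eqVneq s [::]) => [s0|sn].
  exists a, al; split => //; first exact: mem_head.
  move=> x k; rewrite s0 inE => /eqP xa e; by rewrite (hk x k xa e).
have hs2 x : x \in s -> exists k, x = g *~ k.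
  by move=> xs; apply: hs; rewrite inE xs orbT.
have [t [tau [ts et hmax]]] := IH sn hs2.
have [le|lt] := boolP (al <= tau).
  exists t, tau; split => //; first by rewrite inE ts orbT.
  move=> x k; rewrite inE => /orP [/eqP xa e|xs e]; last exact: (hmax x k xs e).
  by rewrite (hk x k xa e).
exists a, al; split => //; first exact: mem_head.
move=> x k; rewrite inE => /orP [/eqP xa e|xs e]; first by rewrite (hk x k xa e).
have := hmax x k xs e; move: lt; lia.
Qed.

Lemma coord_min (g : G) (s : seq G) : g != 0 -> s != [::] ->
  (forall x, x \in s -> exists k, x = g *~ k) ->
  exists b beta, [/\ b \in s, b = g *~ beta &
     forall x k, x \in s -> x = g *~ k -> beta <= k].
Proof.
move=> gn sn hs.
have gn' : - g != 0 by rewrite oppr_eq0.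
have hs' x : x \in s -> exists k, x = (- g) *~ k.
  by move/hs => [k ->]; exists (- k); rewrite mulNrz mulrNz opprK.
have [b [beta [bs eb hmin]]] := coord_max gn' sn hs'.
exists b, (- beta); split => //; first by rewrite eb mulNrz mulrNz.
move=> x k xs e; have := hmin x (- k) xs; rewrite mulNrz mulrNz opprK => /(_ e).
lia.
Qed.

Lemma ind_cc (P : {fset G}) : D P -> cc (fun x => ((x \in P) : nat)).
Proof.
move=> DP C x y DC xC yC.
have h z w : z \in C -> w \in C -> z \in P -> w \in P.
  by move=> zC wC zP; rewrite -(part_uniq DC DP zC zP).
have -> : (x \in P) = (y \in P) by apply/idP/idP; apply: h.
by [].
Qed.

Lemma in_inv (E : {fset G}) e : e \in E -> - e \in fset_inv E.
Proof. by move=> eE; apply/imfsetP; exists e. Qed.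

Lemma phiL (E P : {fset G}) (g t b : G) (tau beta : int) (m : nat) :
  D E -> g != 0 -> t \in E -> b \in E -> t = g *~ tau -> b = g *~ beta ->
  (forall e, e \in E -> exists2 eps, e = g *~ eps & beta <= eps <= tau) ->
  D P -> t *+ m.+1 \in P ->
  (forall w, w \in P -> w = t *+ m.+1 \/ w = b *+ m.+1) ->
  forall e, e \in E -> e = t \/ (e = b /\ b *+ m.+1 \in P).
Proof.
move=> DE gn tE bE et eb hE DP tP hP e eE.
pose ind := fun x : G => ((x \in P) : nat).
have ccPh : cc (phi (fset_inv E) ind m) := phi_cc m (ind_cc DP) (part_inv DE).
have Pt : (0 < phi (fset_inv E) ind m t)%N.
  have := phi_mul ind 0 m (t *+ m.+1) (in_inv tE).
  rewrite add0n /= /ind tP.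
  by have -> : t *+ m.+1 + (- t) *+ m = t by rewrite mulNrn mulrS addrK.
have Pe : (0 < phi (fset_inv E) ind m e)%N by rewrite (ccPh E e t DE eE tE).
pose R := fun (j : nat) (y : G) => exists2 p, p \in P &
  exists2 k, y = p + g *~ k & (- (j%:Z * tau) <= k <= - (j%:Z * beta)).
have : R m e.
  apply: (phi_ind (R := R)) Pe.
    move=> y; rewrite /ind lt0b => yP; exists y => //; exists 0.
      by rewrite mulr0z addr0.
    by rewrite !mul0r oppr0; lia.
  move=> j y f' [p pP [k ey bd]] /imfsetP [e' e'E ->].
  have [eps ee bd2] := hE e' e'E.
  exists p => //; exists (k - eps); first by rewrite ey ee mulrzBr addrA.
  move: bd bd2; lia.
move=> [p pP [k ee bd]].
have [eps eeps bde] := hE e eE.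
case: (hP p pP) => pe.
  left; rewrite pe et mulrn_coord -mulrzDr in ee.
  have h := coord_inj gn (etrans (esym eeps) ee).
  rewrite eeps et; congr (_ *~ _); move: h bd bde; lia.
right; rewrite pe eb mulrn_coord -mulrzDr in ee.
have h := coord_inj gn (etrans (esym eeps) ee).
split; last by rewrite -pe.
rewrite eeps eb; congr (_ *~ _); move: h bd bde; lia.
Qed.

Lemma nonneg_nat (z : int) : 0 <= z -> exists n : nat, z = n%:Z.
Proof. by case: z => [n|n] // _; exists n. Qed.

Lemma sum2le (s : seq G) (Fn : G -> nat) a c : uniq s -> a \in s -> c \in s ->
  a != c -> (Fn a + Fn c <= \sum_(f <- s) Fn f)%N.
Proof.
move=> us aS cS ac; rewrite (bigD1_seq a) //= leq_add2l big_mkcond /=.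
rewrite (bigD1_seq c) //= eq_sym ac; exact: leq_addr.
Qed.

Section Coords.
Variables (E : {fset G}) (g t b : G) (tau beta : int).
Hypotheses (gn : g != 0) (tE : t \in E) (bE : b \in E).
Hypotheses (et : t = g *~ tau) (eb : b = g *~ beta).
Hypothesis hE : forall e, e \in E -> exists2 eps, e = g *~ eps & beta <= eps <= tau.

Lemma cnt_range k w : (0 < cnt E k w)%N ->
  exists2 kap, w = g *~ kap & (k%:Z * beta <= kap <= k%:Z * tau).
Proof.
apply: (phi_ind (R := fun j y => exists2 kap, y = g *~ kap &
           (j%:Z * beta <= kap <= j%:Z * tau))).
  move=> y; rewrite /delta0 lt0b => /eqP ->; exists 0; first by rewrite mulr0z.
  by rewrite !mul0r; lia.
move=> j y f [kap ey bd] fE; have [eps ef bd2] := hE fE.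
exists (kap + eps); first by rewrite ey ef mulrzDr.
move: bd bd2; lia.
Qed.

Lemma cnt_top k : cnt E k (t *+ k) = 1%N.
Proof.
elim: k => [|k IH]; first by rewrite /cnt /= /delta0 mulr0n eqxx.
rewrite /cnt /= (bigD1_seq t) ?fset_uniq //= mulrSr addrK.
rewrite [phi _ _ _ _]IH big1_seq ?addn0 // => e /andP [ne eE].
apply/eqP; rewrite eqn0Ngt; apply/negP => /cnt_range [kap ek bd].
have [eps ee bd2] := hE eE.
have ne' : eps != tau by apply: contraNneq ne => h; rewrite ee et h.
move: ek; rewrite ee et mulrn_coord -mulrzDr -mulrzBr => /(coord_inj gn) h.
move: h bd bd2 ne'; move/eqP; lia.
Qed.

Lemma cnt_sum a c : (0 < cnt E (c + a) (b *+ c + t *+ a))%N.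
Proof.
have h1 := phi_mul delta0 0 c 0 bE.
have h2 := phi_mul delta0 c a (0 + b *+ c) tE.
rewrite add0r add0n in h1 h2.
by apply: leq_trans h2; apply: leq_trans h1; rewrite /= /delta0 eqxx.
Qed.

Lemma cnt_int m e eps : tau - beta = m.+1%:Z -> e \in E -> e = g *~ eps ->
  beta < eps < tau -> (2 <= cnt E m.+1 (e *+ m.+1))%N.
Proof.
move=> hm eE ee bd.
have [a ha] : exists a : nat, eps - beta - 1 = a%:Z by apply: nonneg_nat; lia.
have [c hc] : exists c : nat, tau - eps = c%:Z by apply: nonneg_nat; lia.
have et' : e != t.
  apply/negP => /eqP h; move: ee; rewrite h et => /(coord_inj gn); lia.
rewrite /cnt /=.
apply: leq_trans (sum2le _ (fset_uniq E) eE tE et'); rewrite -/(cnt E m _).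
have -> : e *+ m.+1 - e = e *+ m by rewrite mulrSr addrK.
have -> : e *+ m.+1 - t = b *+ c + t *+ a.
  rewrite ee et eb !mulrn_coord -mulrzBr -mulrzDr; congr (_ *~ _).
  rewrite -hm -hc -ha; lia.
have hmc : m = (c + a)%N by move: ha hc hm; lia.
rewrite hmc; have := cnt_kk (c + a) eE; have := cnt_sum a c.
rewrite /cnt => h1 h2; lia.
Qed.

End Coords.

Lemma no3 E x y z : D E -> x \in E -> y \in E -> z \in E ->
  x != y -> x != z -> y != z -> False.
Proof.
move=> DE xE yE zE xy xz yz.
have [g hg] := lc_coords lcG E.
have gn : g != 0.
  apply/negP => /eqP g0; have [kx ex] := hg x xE; have [ky ey] := hg y yE.
  by move: xy; rewrite ex ey g0 !mul0rz eqxx.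
have sn : (E : seq G) != [::].
  by apply/negP => /eqP e0; move: xE; rewrite -[x \in E]/(x \in (E : seq G)) e0.
have [t [tau [tE et tmax]]] := coord_max gn sn hg.
have [b [beta [bE eb bmin]]] := coord_min gn sn hg.
have hE e : e \in E -> exists2 eps, e = g *~ eps & beta <= eps <= tau.
  move=> eE; have [k ek] := hg e eE; exists k => //.
  by rewrite (bmin e k eE ek) (tmax e k eE ek).
have [xi ex bx] := hE x xE.
have [up ey by'] := hE y yE.
have [ze ez bz] := hE z zE.
have nxy : xi != up by apply: contraNneq xy => h; rewrite ex ey h.
have nxz : xi != ze by apply: contraNneq xz => h; rewrite ex ez h.
have nyz : up != ze by apply: contraNneq yz => h; rewrite ey ez h.
have [w [om [wE ew bw]]] : exists w om, [/\ w \in E, w = g *~ om & beta < om < tau].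
  case: (boolP ((beta < xi) && (xi < tau))) => hx; first by exists x, xi.
  case: (boolP ((beta < up) && (up < tau))) => hy; first by exists y, up.
  have cx := ar1 hx bx; have cy := ar1 hy by'.
  exists z, ze; split => //; exact: ar2 cx cy bz nxy nxz nyz.
have [m hm] : exists m : nat, tau - beta = m.+1%:Z.
  have := ar3 bw.
  by case: (tau - beta) => [[|m]|m] // _; exists m.
have [P [DP tP]] := part_ex (t *+ m.+1).
have hP w' : w' \in P -> w' = t *+ m.+1 \/ w' = b *+ m.+1.
  move=> w'P.
  have c1 : cnt E m.+1 w' = 1%N.
    by rewrite (cnt_cc m.+1 DE DP w'P tP) (cnt_top gn tE bE et hE).
  have [e eE we] := cnt_one c1.
  have [eps ee be] := hE e eE.
  case: (eqVneq e t) => [<-|net]; first by left.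
  case: (eqVneq e b) => [<-|neb]; first by right.
  have ne1 : eps != tau by apply: contraNneq net => h; rewrite ee et h.
  have ne2 : eps != beta by apply: contraNneq neb => h; rewrite ee eb h.
  have bd := ar4 be ne1 ne2.
  have := cnt_int gn tE bE et eb hm eE ee bd.
  by rewrite -we c1.
have := phiL DE gn tE bE et eb hE DP tP hP wE.
case => [wt|[wb _]].
  by move: ew; rewrite wt et => /(coord_inj gn) /esym; apply: ar5 bw.
by move: ew; rewrite wb eb => /(coord_inj gn) /esym; apply: ar6 bw.
Qed.

Lemma class_single C u : D C -> u \in C -> (forall w, w \in C -> w = u) -> C = [fset u].
Proof.
move=> DC uC h; apply/fsetP => v; rewrite inE.
by apply/idP/eqP => [/h //|->].
Qed.

Lemma sing_add a c : D [fset a] -> D [fset c] -> D [fset a + c].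
Proof.
move=> Da Dc; have [C [DC acC]] := part_ex (a + c).
suff -> : [fset a + c] = C by [].
apply/esym/class_single => // w wC.
have := phi_cc 1 (ind_cc Da) Dc DC wC acC; rewrite /= !big_seq_fset1 addrK !inE.
by case: eqP => [h _|_]; [rewrite -h subrK | rewrite eqxx].
Qed.

Lemma inv1 (a : G) : fset_inv [fset a] = [fset - a].
Proof.
apply/fsetP => v; rewrite inE; apply/imfsetP/eqP => [[c]|->].
  by rewrite inE => /eqP -> .
by exists a; rewrite ?inE.
Qed.

Lemma sing_neg a : D [fset a] -> D [fset - a].
Proof. by move/part_inv; rewrite inv1. Qed.

Lemma sing_nat a n : D [fset a] -> D [fset a *+ n].
Proof.
move=> Da; elim: n => [|n IH]; first by rewrite mulr0n; exact: part0.
by rewrite mulrS; apply: sing_add.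
Qed.

Lemma sing_mulz a z : D [fset a] -> D [fset a *~ z].
Proof.
move=> Da; case: z => n; first exact: sing_nat.
by rewrite NegzE mulrNz; apply: sing_neg; apply: sing_nat.
Qed.

Lemma sumE2 (s : seq G) (Fn : G -> nat) x y : uniq s -> x \in s -> y \in s -> x != y ->
  (forall e, e \in s -> e = x \/ e = y) -> (\sum_(e <- s) Fn e = Fn x + Fn y)%N.
Proof.
move=> us xs ys xy h; rewrite (bigD1_seq x) //=; congr (_ + _)%N.
rewrite big_mkcond /= (bigD1_seq y) //= eq_sym xy big1_seq ?addn0 // => e /andP [ne es].
by case: (h e es) => ee; [rewrite ee eqxx | move: ne; rewrite ee eqxx].
Qed.

Lemma two_elems E x y : D E -> x \in E -> y \in E -> x != y ->
  forall e, e \in E -> e = x \/ e = y.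
Proof.
move=> DE xE yE xy e eE.
case: (eqVneq e x) => [->|ex]; first by left.
case: (eqVneq e y) => [->|ey]; first by right.
by case: (no3 DE eE xE yE ex ey xy).
Qed.

Lemma two_sum E x y : D E -> x \in E -> y \in E -> x != y -> D [fset x + y].
Proof.
move=> DE xE yE xy; have h2 := two_elems DE xE yE xy.
have cE w : cnt E 2 w = (delta0 (w - x - x)%R + delta0 (w - x - y)%R +
    (delta0 (w - y - x)%R + delta0 (w - y - y)%R))%N.
  rewrite /cnt /= (sumE2 _ (fset_uniq E) xE yE xy h2).
  by rewrite !(sumE2 _ (fset_uniq E) xE yE xy h2).
have [C [DC sC]] := part_ex (x + y).
suff -> : [fset x + y] = C by [].
apply/esym/class_single => // w wC.
have := cnt_cc 2 DE DC wC sC; rewrite !cE /delta0.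
have -> : x + y - x - y = 0 by rewrite [x + y]addrC addrK subrr.
have -> : x + y - y - x = 0 by rewrite addrK subrr.
rewrite eqxx.
have -> : (x + y - x - x == 0) = false.
  by apply/negbTE; rewrite [x + y]addrC addrK subr_eq0 eq_sym.
have -> : (x + y - y - y == 0) = false by apply/negbTE; rewrite addrK subr_eq0.
case: (eqVneq w (x + y)) => // nw.
have -> : (w - x - y == 0) = false.
  by apply/negbTE; rewrite -addrA -opprD subr_eq0.
have -> : (w - y - x == 0) = false.
  by apply/negbTE; rewrite -addrA -opprD subr_eq0 addrC.
case: (eqVneq (w - x - x) 0) => [h1|] //; case: (eqVneq (w - y - y) 0) => [h3|] //= _.
have e1 : w = x + x by move/eqP: h1; rewrite -addrA -opprD subr_eq0 => /eqP.
have e3 : w = y + y by move/eqP: h3; rewrite -addrA -opprD subr_eq0 => /eqP.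
have : x - y = 0.
  apply: (@tfG _ 2) => //; rewrite mulr2n addrACA -opprD -e1 -e3 subrr //.
by move/eqP; rewrite subr_eq0 (negbTE xy).
Qed.

Lemma kill2 E t b g (tau beta : int) h (eta : int) : D E -> g != 0 -> t \in E -> b \in E ->
  t = g *~ tau -> b = g *~ beta -> beta < tau ->
  (forall e, e \in E -> e = t \/ e = b) -> D [fset h] -> h = g *~ eta -> eta != 0 -> False.
Proof.
move=> DE gn tE bE et eb bt h2 Dh eh en.
have hE e : e \in E -> exists2 eps, e = g *~ eps & beta <= eps <= tau.
  move=> eE; case: (h2 e eE) => ->; [exists tau | exists beta] => //; move: bt; lia.
have Dht : D [fset t *~ eta].
  have -> : t *~ eta = h *~ tau by rewrite et eh -!mulrzA mulrC.
  exact: sing_mulz.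
have [m Dm] : exists m : nat, D [fset t *+ m.+1].
  move: Dht en eh; case: eta => [[|m]|m] //= Dt _ _; first by exists m.
  by exists m; move: Dt; rewrite NegzE mulrNz => /sing_neg; rewrite opprK.
have hP w : w \in [fset t *+ m.+1] -> w = t *+ m.+1 \/ w = b *+ m.+1.
  by rewrite inE => /eqP ->; left.
have tP : t *+ m.+1 \in [fset t *+ m.+1] by rewrite inE.
have := phiL DE gn tE bE et eb hE Dm tP hP bE.
have bnt : b != t.
  apply/negP => /eqP e; move: bt; rewrite -(coord_inj gn (etrans (esym eb) (etrans e et))).
  lia.
case => [/eqP|[_]]; first by rewrite (negbTE bnt).
rewrite inE => /eqP e.
have : (b - t) *+ m.+1 = 0 by rewrite mulrnBl e subrr.
by move/(tfG (ltn0Sn m))/eqP; rewrite subr_eq0 (negbTE bnt).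
Qed.

Lemma sing_kill E x y h : D E -> x \in E -> y \in E -> x != y ->
  D [fset h] -> h != 0 -> False.
Proof.
move=> DE xE yE xy Dh hn.
have h2 := two_elems DE xE yE xy.
have [g hg] := lc_coords lcG [:: h; x; y].
have [eta eh] := hg h (mem_head _ _).
have [xi ex] : exists k, x = g *~ k by apply: hg; rewrite !inE eqxx orbT.
have [up ey] : exists k, y = g *~ k by apply: hg; rewrite !inE eqxx !orbT.
have gn : g != 0 by apply: contraNneq hn => g0; rewrite eh g0 mul0rz.
have en : eta != 0 by apply: contraNneq hn => e0; rewrite eh e0 mulr0z.
have nxu : xi != up by apply: contraNneq xy => e; rewrite ex ey e.
case: (boolP (xi < up)) => lt.
  apply: (kill2 DE gn yE xE ey ex lt _ Dh eh en).
  by move=> e /h2 [] ->; [right | left].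
have lt' : up < xi by move: lt nxu; lia.
exact: (kill2 DE gn xE yE ex ey lt' h2 Dh eh en).
Qed.

Lemma class_ne C : D C -> exists x, x \in C.
Proof. by case: hD => [[h _] _] /h /fset0Pn. Qed.

Lemma dich : (forall C, D C -> exists g, C = [fset g]) \/
             (forall C, D C -> exists g, C = [fset g; - g]).
Proof.
case: (classic (exists h, h != 0 /\ D [fset h])) => [[h [hn Dh]]|nh].
  left => C DC; have [x xC] := class_ne DC; exists x.
  apply: class_single => // w wC; apply/eqP; apply/negP => /negP wx.
  exact: sing_kill DC wC xC wx Dh hn.
right => C DC; have [x xC] := class_ne DC.
case: (classic (exists y, y \in C /\ y != x)) => [[y [yC yx]]|ny].
  have xy : x != y by rewrite eq_sym.
  have Ds := two_sum DC xC yC xy.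
  have s0 : x + y = 0.
    apply/eqP; apply/negP => /negP s0; apply: nh; by exists (x + y).
  have ey : y = - x by apply/eqP; rewrite -subr_eq0 opprK addrC s0.
  exists x; apply/fsetP => v; rewrite !inE; apply/idP/idP.
    move=> vC; case: (two_elems DC xC yC xy vC) => ->.
      by rewrite eqxx.
    by rewrite ey eqxx orbT.
  by case/orP => /eqP ->; rewrite -?ey.
have Cx : C = [fset x].
  apply: class_single => // w wC; apply/eqP; apply/negP => /negP wx.
  by apply: ny; exists w.
have x0 : x = 0.
  apply/eqP; apply/negP => /negP xn; apply: nh; exists x; by rewrite -Cx.
exists 0; rewrite Cx x0; apply/fsetP => v; rewrite !inE oppr0 orbb //.
Qed.

End Main.



Lemma span_equiv (F : fieldType) (G : zmodType) (D1 D2 : {fset G} -> Prop) (f : G -> F) :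
  (forall C, D1 C <-> D2 C) -> span_of D1 f <-> span_of D2 f.
Proof.
move=> h; split => [[Cs [a [h1 h2]]]|[Cs [a [h1 h2]]]]; exists Cs, a; split => //.
  by move=> C /h1 /h.
by move=> C /h1 /h.
Qed.

Theorem theorem4p1 (F : fieldType) (G : zmodType)
  (charF0 : [pchar F] =i pred0)
  (tfG : torsion_free G) (lcG : locally_cyclic G)
  (S : (G -> F) -> Prop) (hS : @schur_ring F G S) :
  (forall f, S f <-> @group_ring F G f) \/ (forall f, S f <-> @sym_group_ring F G f).
Proof.
have [D [hD hSD]] := hS.
case: (dich charF0 tfG hD lcG) => hC; [left|right] => f; rewrite hSD;
  apply: span_equiv => C; rewrite /singleton_partition /symmetric_partition; split.
- exact: hC.
- move=> [g ->]; have [C' [DC' gC']] := part_ex hD g.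
  have [g' eC'] := hC C' DC'; move: gC'; rewrite eC' in_fset1 => /eqP e.
  by rewrite e -eC'.
- exact: hC.
- move=> [g ->]; have [C' [DC' gC']] := part_ex hD g.
  have [g' eC'] := hC C' DC'; move: gC'; rewrite eC' in_fset2 => /orP [] /eqP e.
    by rewrite e -eC'.
  suff -> : [fset g; - g] = C' by [].
  by rewrite eC' e opprK; apply/fsetP => v; rewrite !inE orbC.
Qed.
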